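(* Over $\mathsf{RCA}_0$, the Additive Ramsey Theorem implies $\Sigma^0_2\text{-}\mathsf{IND}$.
   Context: $\mathsf{RCA}_0$: second-order arithmetic with $\Delta^0_1$-comprehension and $\Sigma^0_1$-induction. $\Sigma^0_2\text{-}\mathsf{IND}$: the induction scheme for $\Sigma^0_2$ formulae with parameters. Additive Ramsey Theorem: for every finite semigroup $(S,* )$ and every colouring $C:[\mathbb{N}]^2\to S$ such that $C(i,j)*C(j,k)=C(i,k)$ for all $i<j<k$, there is an infinite set $I\subseteq\mathbb{N}$ and $a\in S$ with $C(i,j)=a$ for all $i<j$ in $I$. *)

(* Defs.v *)
(* Semantic (Henkin-model) formalization of second-order
   arithmetic L2, following Simpson, "Subsystems of Second Order Arithmetic". *)

Record L2structure : Type := {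
  Num : Type;
  SetS : Type;
  zero : Num;
  one : Num;
  plus : Num -> Num -> Num;
  times : Num -> Num -> Num;
  lt : Num -> Num -> Prop;
  mem : Num -> SetS -> Prop
}.

Definition scons {A : Type} (a : A) (e : nat -> A) : nat -> A :=
  fun n => match n with 0 => a | S k => e k end.

(** * Arithmetical formulas of L2 (number variables de Bruijn, set parameters
    indexed by nat). Set quantifiers are not needed for the schemas below. *)
Inductive term : Type :=
| tvar : nat -> term
| tzero : term
| tone : term
| tplus : term -> term -> term
| ttimes : term -> term -> term.

Inductive formula : Type :=
| fEq : term -> term -> formula
| fLt : term -> term -> formula
| fMem : term -> nat -> formula
| fNot : formula -> formula
| fAnd : formula -> formula -> formula
| fOr : formula -> formula -> formula
| fImp : formula -> formula -> formula
| fAllN : formula -> formula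
| fExN : formula -> formula
| fBAllN : term -> formula -> formula      (* forall n < t, phi (t outside the binder) *)
| fBExN : term -> formula -> formula.

Fixpoint teval (M : L2structure) (e : nat -> Num M) (t : term) : Num M :=
  match t with
  | tvar n => e n
  | tzero => zero M
  | tone => one M
  | tplus a b => plus M (teval M e a) (teval M e b)
  | ttimes a b => times M (teval M e a) (teval M e b)
  end.

Fixpoint sat (M : L2structure) (e : nat -> Num M) (E : nat -> SetS M)
  (phi : formula) : Prop :=
  match phi with
  | fEq a b => teval M e a = teval M e b
  | fLt a b => lt M (teval M e a) (teval M e b)
  | fMem t k => mem M (teval M e t) (E k)
  | fNot p => ~ sat M e E p
  | fAnd p q => sat M e E p /\ sat M e E q
  | fOr p q => sat M e E p \/ sat M e E q
  | fImp p q => sat M e E p -> sat M e E q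
  | fAllN p => forall m, sat M (scons m e) E p
  | fExN p => exists m, sat M (scons m e) E p
  | fBAllN t p => forall m, lt M m (teval M e t) -> sat M (scons m e) E p
  | fBExN t p => exists m, lt M m (teval M e t) /\ sat M (scons m e) E p
  end.

Inductive is_Delta0 : formula -> Prop :=
| D0Eq a b : is_Delta0 (fEq a b)
| D0Lt a b : is_Delta0 (fLt a b)
| D0Mem t k : is_Delta0 (fMem t k)
| D0Not p : is_Delta0 p -> is_Delta0 (fNot p)
| D0And p q : is_Delta0 p -> is_Delta0 q -> is_Delta0 (fAnd p q)
| D0Or p q : is_Delta0 p -> is_Delta0 q -> is_Delta0 (fOr p q)
| D0Imp p q : is_Delta0 p -> is_Delta0 q -> is_Delta0 (fImp p q)
| D0BAll t p : is_Delta0 p -> is_Delta0 (fBAllN t p)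
| D0BEx t p : is_Delta0 p -> is_Delta0 (fBExN t p).

Fixpoint is_Sigma (k : nat) (phi : formula) : Prop :=
  match k with
  | 0 => is_Delta0 phi
  | S j => match phi with fExN p => is_Pi j p | _ => False end
  end
with is_Pi (k : nat) (phi : formula) : Prop :=
  match k with
  | 0 => is_Delta0 phi
  | S j => match phi with fAllN p => is_Sigma j p | _ => False end
  end.

Definition BasicAxioms (M : L2structure) : Prop :=
  (forall n, plus M n (one M) <> zero M) /\
  (forall m n, plus M m (one M) = plus M n (one M) -> m = n) /\
  (forall m, plus M m (zero M) = m) /\
  (forall m n, plus M m (plus M n (one M)) = plus M (plus M m n) (one M)) /\
  (forall m, times M m (zero M) = zero M) /\
  (forall m n, times M m (plus M n (one M)) = plus M (times M m n) m) /\
  (forall m, ~ lt M m (zero M)) /\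
  (forall m n, lt M m (plus M n (one M)) <-> (lt M m n \/ m = n)).

(** Sigma^0_k induction scheme (variable 0 is the induction variable; all
    other number and set variables are parameters). *)
Definition SigmaIND (k : nat) (M : L2structure) : Prop :=
  forall phi, is_Sigma k phi ->
  forall (e : nat -> Num M) (E : nat -> SetS M),
    sat M (scons (zero M) e) E phi ->
    (forall m, sat M (scons m e) E phi -> sat M (scons (plus M m (one M)) e) E phi) ->
    forall m, sat M (scons m e) E phi.

Definition Delta01CA (M : L2structure) : Prop :=
  forall phi psi, is_Sigma 1 phi -> is_Pi 1 psi ->
  forall (e : nat -> Num M) (E : nat -> SetS M),
    (forall m, sat M (scons m e) E phi <-> sat M (scons m e) E psi) ->
    exists X : SetS M, forall m, mem M m X <-> sat M (scons m e) E phi.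

Definition RCA0 (M : L2structure) : Prop :=
  BasicAxioms M /\ SigmaIND 1 M /\ Delta01CA M.

Section ART.
Variable M : L2structure.

Definition le (m n : Num M) : Prop := lt M m n \/ m = n.

(* Cantor pairing: p = (x+y)(x+y+1)/2 + y, i.e. 2p = (x+y)(x+y+1) + 2y *)
Definition ispair (x y p : Num M) : Prop :=
  plus M p p = plus M (times M (plus M x y) (plus M (plus M x y) (one M))) (plus M y y).

Definition graph3 (R : SetS M) (x y z : Num M) : Prop :=
  exists p q, ispair x y p /\ ispair p z q /\ mem M q R.

Definition FiniteSet (U : SetS M) : Prop :=
  exists b, forall x, mem M x U -> lt M x b.

Definition FinSemigroup (U Op : SetS M) : Prop :=
  FiniteSet U /\
  (forall a b, mem M a U -> mem M b U -> exists c, mem M c U /\ graph3 Op a b c) /\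
  (forall a b c c', mem M a U -> mem M b U ->
      graph3 Op a b c -> graph3 Op a b c' -> c = c') /\
  (forall a b c ab bc abc abc', mem M a U -> mem M b U -> mem M c U ->
      graph3 Op a b ab -> graph3 Op ab c abc ->
      graph3 Op b c bc -> graph3 Op a bc abc' -> abc = abc').

Definition Colouring (U C : SetS M) : Prop :=
  (forall i j, lt M i j -> exists c, mem M c U /\ graph3 C i j c) /\
  (forall i j c c', lt M i j -> graph3 C i j c -> graph3 C i j c' -> c = c').

Definition Additive (Op C : SetS M) : Prop :=
  forall i j k a b d, lt M i j -> lt M j k ->
    graph3 C i j a -> graph3 C j k b -> graph3 C i k d -> graph3 Op a b d.

Definition Infinite (I : SetS M) : Prop :=
  forall n, exists m, le n m /\ mem M m I.

Definition ART : Prop :=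
  forall U Op C : SetS M,
    FinSemigroup U Op -> Colouring U C -> Additive Op C ->
    exists (I : SetS M) (a : Num M),
      mem M a U /\ Infinite I /\
      (forall i j, mem M i I -> mem M j I -> lt M i j -> graph3 C i j a).
End ART.

(* Main.v *)
Require Import Defs.
From Stdlib Require Import List Classical FunctionalExtensionality Setoid Morphisms Ring.
Import ListNotations.

Fixpoint pre {A} (l : list A) (e : nat -> A) : nat -> A :=
  match l with [] => e | x :: l' => scons x (pre l' e) end.

Definition upr (s : nat -> nat) : nat -> nat :=
  fun n => match n with 0 => 0 | S k => S (s k) end.

Fixpoint tren (s : nat -> nat) (t : term) : term :=
  match t with
  | tvar n => tvar (s n) | tzero => tzero | tone => tone
  | tplus a b => tplus (tren s a) (tren s b)
  | ttimes a b => ttimes (tren s a) (tren s b) end.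

Fixpoint fren (s : nat -> nat) (f : formula) : formula :=
  match f with
  | fEq a b => fEq (tren s a) (tren s b)
  | fLt a b => fLt (tren s a) (tren s b)
  | fMem t k => fMem (tren s t) k
  | fNot p => fNot (fren s p)
  | fAnd p q => fAnd (fren s p) (fren s q)
  | fOr p q => fOr (fren s p) (fren s q)
  | fImp p q => fImp (fren s p) (fren s q)
  | fAllN p => fAllN (fren (upr s) p)
  | fExN p => fExN (fren (upr s) p)
  | fBAllN t p => fBAllN (tren s t) (fren (upr s) p)
  | fBExN t p => fBExN (tren s t) (fren (upr s) p)
  end.

Lemma teval_ren M e s t : teval M e (tren s t) = teval M (fun n => e (s n)) t.
Proof. induction t; simpl; congruence. Qed.

Lemma scons_up {A} (m : A) e s :
  (fun n => scons m e (upr s n)) = scons m (fun n => e (s n)).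
Proof. extensionality n; destruct n; reflexivity. Qed.

Lemma sat_ren M f : forall e E s, sat M e E (fren s f) <-> sat M (fun n => e (s n)) E f.
Proof.
  induction f; intros e E s; simpl; rewrite ?teval_ren; try tauto;
  try (rewrite IHf; tauto); try (rewrite IHf1, IHf2; tauto);
  setoid_rewrite IHf; setoid_rewrite scons_up; reflexivity.
Qed.

Lemma D0_ren f s : is_Delta0 f -> is_Delta0 (fren s f).
Proof. intros H; revert s; induction H; intros; simpl; constructor; auto. Qed.

Definition placeL (ps : list nat) (K : nat) (n : nat) : nat :=
  nth n ps (K + (n - length ps)).

Lemma env_place {A} (env : nat -> A) ps K :
  (fun n => env (placeL ps K n)) = pre (map env ps) (fun k => env (K + k)).
Proof.
  extensionality n. unfold placeL. revert n; induction ps; intros n; simpl.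
  - destruct n; reflexivity.
  - destruct n; simpl; auto.
Qed.

Lemma sat_place M e E ps K f :
  sat M e E (fren (placeL ps K) f) <-> sat M (pre (map e ps) (fun k => e (K+k))) E f.
Proof. rewrite sat_ren, env_place; reflexivity. Qed.

Section Main.

Variable M : L2structure.
Hypothesis HB : BasicAxioms M.
Hypothesis HI : SigmaIND 1 M.
Variable E : nat -> SetS M.

Local Notation z0 := (zero M).
Local Notation o1 := (one M).
Local Infix "⊕" := (plus M) (at level 50, left associativity).
Local Infix "⊗" := (times M) (at level 40, left associativity).
Local Infix "≺" := (lt M) (at level 70).

Lemma A1 n : n ⊕ o1 <> z0. Proof. apply HB. Qed.
Lemma A2 m n : m ⊕ o1 = n ⊕ o1 -> m = n. Proof. apply HB. Qed.
Lemma A3 m : m ⊕ z0 = m. Proof. apply HB. Qed.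
Lemma A4 m n : m ⊕ (n ⊕ o1) = (m ⊕ n) ⊕ o1. Proof. apply HB. Qed.
Lemma A5 m : m ⊗ z0 = z0. Proof. apply HB. Qed.
Lemma A6 m n : m ⊗ (n ⊕ o1) = m ⊗ n ⊕ m. Proof. apply HB. Qed.
Lemma A7 m : ~ m ≺ z0. Proof. apply HB. Qed.
Lemma A8 m n : m ≺ n ⊕ o1 <-> m ≺ n \/ m = n. Proof. apply HB. Qed.

Definition tl0 : nat -> Num M := fun _ => z0.

Lemma IND1 (F : formula) (HF : is_Delta0 F) (tl : nat -> Num M) (P : Num M -> Prop) :
  (forall n, (exists w, sat M (scons w (scons n tl)) E F) <-> P n) ->
  P z0 -> (forall n, P n -> P (n ⊕ o1)) -> forall n, P n.
Proof.
  intros HP H0 HS n. apply HP.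
  apply (HI (fExN F) HF tl E); simpl.
  - apply HP; auto.
  - intros m Hm. apply HP. apply HS. apply HP. exact Hm.
Qed.

Lemma IND0 (F : formula) (HF : is_Delta0 F) (tl : nat -> Num M) (P : Num M -> Prop) :
  (forall w n, sat M (scons w (scons n tl)) E F <-> P n) ->
  P z0 -> (forall n, P n -> P (n ⊕ o1)) -> forall n, P n.
Proof.
  intros HP. apply (IND1 F HF tl). intros n; split.
  - intros [w Hw]. apply (HP w). exact Hw.
  - intros H. exists z0. apply HP. exact H.
Qed.

Ltac d0 := repeat (first [apply D0_ren | constructor | assumption]).

Ltac ind1 F tl := match goal with |- forall x, @?P x =>
  apply (IND1 F ltac:(d0) tl P) end.

Ltac ind0 F tl := match goal with |- forall x, @?P x =>
  apply (IND0 F ltac:(d0) tl P) end;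
  [try (intros ?w ?n; simpl; repeat setoid_rewrite sat_place; simpl; reflexivity) | | ].

Lemma add_0_l n : z0 ⊕ n = n.
Proof.
  revert n. ind0 (fEq (tplus tzero (tvar 1)) (tvar 1)) tl0.
  - apply A3.
  - intros n IH. rewrite A4, IH; reflexivity.
Qed.

Lemma add_succ_l m n : (m ⊕ o1) ⊕ n = (m ⊕ n) ⊕ o1.
Proof.
  revert n. ind0 (fEq (tplus (tplus (tvar 2) tone) (tvar 1)) (tplus (tplus (tvar 2) (tvar 1)) tone)) (scons m tl0).
  - rewrite !A3; reflexivity.
  - intros n IH. rewrite !A4, IH; reflexivity.
Qed.

Lemma add_comm m n : m ⊕ n = n ⊕ m.
Proof.
  revert n. ind0 (fEq (tplus (tvar 2) (tvar 1)) (tplus (tvar 1) (tvar 2))) (scons m tl0).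
  - rewrite A3, add_0_l; reflexivity.
  - intros n IH. rewrite A4, IH, add_succ_l; reflexivity.
Qed.

Lemma add_assoc m n k : (m ⊕ n) ⊕ k = m ⊕ (n ⊕ k).
Proof.
  revert k. ind0 (fEq (tplus (tplus (tvar 2) (tvar 3)) (tvar 1)) (tplus (tvar 2) (tplus (tvar 3) (tvar 1)))) (scons m (scons n tl0)).
  - rewrite !A3; reflexivity.
  - intros k IH. rewrite !A4, IH; reflexivity.
Qed.

Lemma mul_0_l n : z0 ⊗ n = z0.
Proof.
  revert n. ind0 (fEq (ttimes tzero (tvar 1)) tzero) tl0.
  - apply A5.
  - intros n IH. rewrite A6, IH, A3; reflexivity.
Qed.

Lemma mul_succ_l m n : (m ⊕ o1) ⊗ n = m ⊗ n ⊕ n.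
Proof.
  revert n. ind0 (fEq (ttimes (tplus (tvar 2) tone) (tvar 1)) (tplus (ttimes (tvar 2) (tvar 1)) (tvar 1))) (scons m tl0).
  - rewrite !A5, A3; reflexivity.
  - intros n IH. rewrite !A6, IH.
    rewrite !add_assoc. f_equal. rewrite !A4, (add_comm n m); reflexivity.
Qed.

Lemma mul_comm m n : m ⊗ n = n ⊗ m.
Proof.
  revert n. ind0 (fEq (ttimes (tvar 2) (tvar 1)) (ttimes (tvar 1) (tvar 2))) (scons m tl0).
  - rewrite A5, mul_0_l; reflexivity.
  - intros n IH. rewrite A6, IH, mul_succ_l; reflexivity.
Qed.

Lemma mul_add_l m n k : m ⊗ (n ⊕ k) = m ⊗ n ⊕ m ⊗ k.
Proof.
  revert k. ind0 (fEq (ttimes (tvar 2) (tplus (tvar 3) (tvar 1))) (tplus (ttimes (tvar 2) (tvar 3)) (ttimes (tvar 2) (tvar 1)))) (scons m (scons n tl0)).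
  - rewrite A3, A5, A3; reflexivity.
  - intros k IH. rewrite A4, !A6, IH, add_assoc; reflexivity.
Qed.

Lemma mul_assoc m n k : (m ⊗ n) ⊗ k = m ⊗ (n ⊗ k).
Proof.
  revert k. ind0 (fEq (ttimes (ttimes (tvar 2) (tvar 3)) (tvar 1)) (ttimes (tvar 2) (ttimes (tvar 3) (tvar 1)))) (scons m (scons n tl0)).
  - rewrite !A5; reflexivity.
  - intros k IH. rewrite !A6, IH, mul_add_l; reflexivity.
Qed.

Lemma Msrt : semi_ring_theory z0 o1 (plus M) (times M) eq.
Proof.
  constructor.
  - apply add_0_l.
  - apply add_comm.
  - intros; symmetry; apply add_assoc.
  - intros n. rewrite mul_comm, <- (add_0_l o1), A6, A5, !add_0_l; reflexivity.
  - apply mul_0_l.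
  - apply mul_comm.
  - intros; symmetry; apply mul_assoc.
  - intros n m p. rewrite mul_comm, mul_add_l, (mul_comm p n), (mul_comm p m); reflexivity.
Qed.

Add Ring Mring : Msrt.


Local Notation le := (le M).

Lemma lt_succ n : n ≺ n ⊕ o1. Proof. apply A8; auto. Qed.

Lemma lt_0_succ n : z0 ≺ n ⊕ o1.
Proof.
  revert n. ind0 (fLt tzero (tplus (tvar 1) tone)) tl0.
  - apply lt_succ.
  - intros n IH. apply A8; auto.
Qed.

Lemma zero_or_succ n : n = z0 \/ exists k, n = k ⊕ o1.
Proof.
  revert n. apply (IND1 (fOr (fEq (tvar 1) tzero) (fEq (tvar 1) (tplus (tvar 0) tone))) ltac:(repeat constructor) tl0).
  - intros n; simpl; split.
    + intros [w [H|H]]; eauto.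
    + intros [H|[k H]]; [exists z0; auto | eauto].
  - auto.
  - intros n _. right; eauto.
Qed.

Lemma lt_trans m n k : m ≺ n -> n ≺ k -> m ≺ k.
Proof.
  revert k. ind0 (fImp (fLt (tvar 2) (tvar 3)) (fImp (fLt (tvar 3) (tvar 1)) (fLt (tvar 2) (tvar 1)))) (scons m (scons n tl0)).
  - intros _ H; elim (A7 _ H).
  - intros k IH H1 H2. apply A8. apply A8 in H2. destruct H2 as [H2|H2]; subst; auto.
Qed.

Lemma lt_succ_le m n : m ≺ n -> m ⊕ o1 ≺ n \/ m ⊕ o1 = n.
Proof.
  revert n. ind0 (fImp (fLt (tvar 2) (tvar 1)) (fOr (fLt (tplus (tvar 2) tone) (tvar 1)) (fEq (tplus (tvar 2) tone) (tvar 1)))) (scons m tl0).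
  - intros H; elim (A7 _ H).
  - intros n IH H. apply A8 in H. destruct H as [H|H].
    + left. apply A8. destruct (IH H); auto.
    + subst. auto.
Qed.

Lemma lt_irrefl n : ~ n ≺ n.
Proof.
  revert n. ind0 (fNot (fLt (tvar 1) (tvar 1))) tl0.
  - apply A7.
  - intros n IH H. apply A8 in H. destruct H as [H1|H1].
    + apply IH. apply (lt_trans _ _ _ (lt_succ n) H1).
    + apply IH. pattern n at 2. rewrite <- H1. apply lt_succ.
Qed.

Lemma trich m n : m ≺ n \/ m = n \/ n ≺ m.
Proof.
  revert n. ind0 (fOr (fLt (tvar 2) (tvar 1)) (fOr (fEq (tvar 2) (tvar 1)) (fLt (tvar 1) (tvar 2)))) (scons m tl0).
  - destruct (zero_or_succ m) as [->|[k ->]]; auto. right; right; apply lt_0_succ.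
  - intros n [H|[H|H]].
    + left. apply A8; auto.
    + left. apply A8; auto.
    + destruct (lt_succ_le _ _ H); auto.
Qed.

Lemma lt_asym m n : m ≺ n -> ~ n ≺ m.
Proof. intros H1 H2. apply (lt_irrefl m). eapply lt_trans; eauto. Qed.

Lemma lt_neq m n : m ≺ n -> m <> n.
Proof. intros H ->. apply (lt_irrefl _ H). Qed.

Lemma le_lt_trans m n k : le m n -> n ≺ k -> m ≺ k.
Proof. intros [H|H] H2; subst; auto. eapply lt_trans; eauto. Qed.

Lemma lt_le_trans m n k : m ≺ n -> le n k -> m ≺ k.
Proof. intros H [H2|H2]; subst; auto. eapply lt_trans; eauto. Qed.

Lemma le_trans m n k : le m n -> le n k -> le m k.
Proof. intros [H|H] H2; subst; auto. left. eapply lt_le_trans; eauto. Qed.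

Lemma le_refl m : le m m. Proof. right; auto. Qed.

Lemma not_lt_le m n : ~ m ≺ n -> le n m.
Proof. intros H. destruct (trich m n) as [H1|[H1|H1]]; [tauto| right; auto | left; auto]. Qed.

Lemma le_not_lt m n : le n m -> ~ m ≺ n.
Proof. intros [H|H] H2; subst. apply (lt_asym _ _ H H2). apply (lt_irrefl _ H2). Qed.

Lemma le_antisym m n : le m n -> le n m -> m = n.
Proof. intros [H|H] H2; auto. exfalso; apply (le_not_lt _ _ H2 H). Qed.

Lemma lt_succ_iff m n : m ≺ n ⊕ o1 <-> le m n.
Proof. rewrite A8. unfold Defs.le. tauto. Qed.

Lemma lt_le_succ m n : m ≺ n <-> le (m ⊕ o1) n.
Proof.
  split.
  - intros H; destruct (lt_succ_le _ _ H); [left|right]; auto.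
  - intros H. eapply lt_le_trans; eauto. apply lt_succ.
Qed.

Lemma le_0 n : le z0 n.
Proof. destruct (zero_or_succ n) as [->|[k ->]]. right; auto. left; apply lt_0_succ. Qed.

Lemma lt_succ_mono m n : m ≺ n -> m ⊕ o1 ≺ n ⊕ o1.
Proof. intros H. apply A8. destruct (lt_succ_le _ _ H); auto. Qed.

Lemma lt_add_r m n k : m ≺ n -> m ⊕ k ≺ n ⊕ k.
Proof.
  revert k. ind0 (fImp (fLt (tvar 2) (tvar 3)) (fLt (tplus (tvar 2) (tvar 1)) (tplus (tvar 3) (tvar 1)))) (scons m (scons n tl0)).
  - intros H; rewrite !A3; auto.
  - intros k IH H. rewrite !A4. apply lt_succ_mono; auto.
Qed.

Lemma lt_add_l m n k : m ≺ n -> k ⊕ m ≺ k ⊕ n.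
Proof. intros H. rewrite (add_comm k m), (add_comm k n). apply lt_add_r; auto. Qed.

Lemma lt_add_cancel_r m n k : m ⊕ k ≺ n ⊕ k -> m ≺ n.
Proof.
  intros H. destruct (trich m n) as [H1|[H1|H1]]; auto; exfalso.
  - subst. apply (lt_irrefl _ H).
  - apply (lt_asym _ _ H (lt_add_r _ _ _ H1)).
Qed.

Lemma add_cancel_r m n k : m ⊕ k = n ⊕ k -> m = n.
Proof.
  intros H. destruct (trich m n) as [H1|[H1|H1]]; auto; exfalso.
  - apply (lt_add_r _ _ k) in H1. rewrite H in H1. apply (lt_irrefl _ H1).
  - apply (lt_add_r _ _ k) in H1. rewrite H in H1. apply (lt_irrefl _ H1).
Qed.

Lemma le_add m k : le m (m ⊕ k).
Proof.
  destruct (le_0 k) as [H|H].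
  - left. rewrite <- (A3 m) at 1. apply lt_add_l; auto.
  - subst. rewrite A3. apply le_refl.
Qed.

Lemma lt_add2 a b c d : a ≺ b -> le c d -> a ⊕ c ≺ b ⊕ d.
Proof.
  intros H [H2|H2].
  - eapply lt_trans. apply lt_add_r; eauto. apply lt_add_l; auto.
  - subst. apply lt_add_r; auto.
Qed.

Lemma le_add2 a b c d : le a b -> le c d -> le (a ⊕ c) (b ⊕ d).
Proof.
  intros [H|H] H2. left; apply lt_add2; auto.
  subst. destruct H2 as [H2|H2]; [left; apply lt_add_l; auto| subst; apply le_refl].
Qed.

Lemma lt_exists m n : m ≺ n -> exists k, n = m ⊕ k ⊕ o1.
Proof.
  revert n. ind1 (fImp (fLt (tvar 2) (tvar 1)) (fEq (tvar 1) (tplus (tplus (tvar 2) (tvar 0)) tone))) (scons m tl0).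
  - intros n; simpl; split.
    + intros [w Hw] H. exists w. auto.
    + intros H. destruct (classic (m ≺ n)) as [H1|H1].
      * destruct (H H1) as [k Hk]. exists k. auto.
      * exists z0. tauto.
  - intros H; elim (A7 _ H).
  - intros n IH H. apply A8 in H. destruct H as [H|H].
    + destruct (IH H) as [k Hk]. exists (k ⊕ o1). rewrite Hk. ring.
    + subst. exists z0. ring.
Qed.

Lemma le_exists m n : le m n -> exists k, n = m ⊕ k.
Proof.
  intros [H|H]. destruct (lt_exists _ _ H) as [k Hk]. exists (k ⊕ o1). rewrite Hk; ring.
  subst. exists z0. ring.
Qed.

Lemma lt_mul_r m n k : m ≺ n -> m ⊗ (k ⊕ o1) ≺ n ⊗ (k ⊕ o1).
Proof.
  revert k. ind0 (fImp (fLt (tvar 2) (tvar 3)) (fLt (ttimes (tvar 2) (tplus (tvar 1) tone)) (ttimes (tvar 3) (tplus (tvar 1) tone)))) (scons m (scons n tl0)).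
  - intros H. rewrite !A6, !A5, !add_0_l. auto.
  - intros k IH H. rewrite (A6 m), (A6 n). apply lt_add2; auto. left; auto.
Qed.

Lemma le_mul_r m n k : le m n -> le (m ⊗ k) (n ⊗ k).
Proof.
  intros [H|H]; [|subst; apply le_refl].
  destruct (zero_or_succ k) as [->|[k' ->]].
  - rewrite !A5. apply le_refl.
  - left. apply lt_mul_r; auto.
Qed.

Lemma double_lt u v : u ⊕ u ≺ v ⊕ v -> u ≺ v.
Proof.
  intros H. destruct (trich u v) as [H1|[H1|H1]]; auto; exfalso.
  - subst. apply (lt_irrefl _ H).
  - apply (lt_asym _ _ H). apply lt_add2; auto. left; auto.
Qed.

Lemma double_le u v : le (u ⊕ u) (v ⊕ v) -> le u v.
Proof.
  intros [H|H]. left; apply double_lt; auto.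
  destruct (trich u v) as [H1|[H1|H1]]. left; auto. right; auto.
  exfalso. assert (v ⊕ v ≺ u ⊕ u) by (apply lt_add2; auto; left; auto).
  rewrite H in H0. apply (lt_irrefl _ H0).
Qed.

Lemma double_inj u v : u ⊕ u = v ⊕ v -> u = v.
Proof. intros H. apply le_antisym; apply double_le; rewrite H; apply le_refl. Qed.


Local Notation ispair := (ispair M).

Lemma even_tri n : exists k, n ⊗ (n ⊕ o1) = k ⊕ k.
Proof.
  revert n. ind1 (fEq (ttimes (tvar 1) (tplus (tvar 1) tone)) (tplus (tvar 0) (tvar 0))) tl0.
  - intros n; simpl; reflexivity.
  - exists z0. ring.
  - intros n [k Hk]. exists (k ⊕ n ⊕ o1).
    transitivity (n ⊗ (n ⊕ o1) ⊕ (n ⊕ o1) ⊕ (n ⊕ o1)). ring. rewrite Hk. ring.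
Qed.

Lemma pair_exists x y : exists p, ispair x y p.
Proof.
  destruct (even_tri (x ⊕ y)) as [k Hk]. exists (k ⊕ y). unfold Defs.ispair.
  rewrite Hk. ring.
Qed.

Lemma le_sq n : le n (n ⊗ n).
Proof.
  destruct (zero_or_succ n) as [->|[k ->]]. rewrite A5. apply le_refl.
  rewrite A6. rewrite (add_comm ((k ⊕ o1) ⊗ k)). apply le_add.
Qed.

Lemma pair_bound x y p : ispair x y p -> le x p /\ le y p.
Proof.
  unfold Defs.ispair. intros H.
  assert (Hx : le x ((x ⊕ y) ⊗ (x ⊕ y))).
  { eapply le_trans. apply le_add. apply le_sq. }
  destruct (le_exists _ _ Hx) as [d Hd].
  split; apply double_le.
  - replace (p ⊕ p) with ((x ⊕ x) ⊕ (d ⊕ y ⊕ y ⊕ y)). apply le_add.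
    rewrite H. transitivity ((x ⊕ y) ⊗ (x ⊕ y) ⊕ (x ⊕ y) ⊕ (y ⊕ y)). rewrite Hd. ring. ring.
  - replace (p ⊕ p) with ((y ⊕ y) ⊕ ((x ⊕ y) ⊗ (x ⊕ y ⊕ o1))). apply le_add.
    rewrite H. ring.
Qed.

Lemma pair_inj_aux x y x' y' p : ispair x y p -> ispair x' y' p -> ~ (x ⊕ y ≺ x' ⊕ y').
Proof.
  unfold Defs.ispair. intros H H' Hlt.
  set (n := x ⊕ y) in *. set (n' := x' ⊕ y') in *.
  destruct (lt_exists _ _ Hlt) as [k Hk].
  assert (Hy : le (y ⊕ y) (n ⊕ n)) by (apply le_add2; unfold n; rewrite (add_comm x y); apply le_add).
  assert (H1 : n ⊗ (n ⊕ o1) ⊕ (y ⊕ y) ≺ (n ⊕ o1) ⊗ (n ⊕ o1 ⊕ o1)).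
  { replace ((n ⊕ o1) ⊗ (n ⊕ o1 ⊕ o1)) with (n ⊗ (n ⊕ o1) ⊕ ((n ⊕ n) ⊕ o1 ⊕ o1)) by ring.
    rewrite (add_comm (n ⊗ (n ⊕ o1))), (add_comm (n ⊗ (n ⊕ o1))).
    apply lt_add2; [|apply le_refl]. eapply le_lt_trans. exact Hy.
    rewrite add_assoc. rewrite <- (A3 (n ⊕ n)) at 1. apply lt_add_l. apply lt_0_succ. }
  assert (H2 : le ((n ⊕ o1) ⊗ (n ⊕ o1 ⊕ o1)) (p ⊕ p)).
  { rewrite H'. rewrite Hk.
    replace ((n ⊕ k ⊕ o1) ⊗ (n ⊕ k ⊕ o1 ⊕ o1) ⊕ (y' ⊕ y')) with
      ((n ⊕ o1) ⊗ (n ⊕ o1 ⊕ o1) ⊕ (k ⊗ (n ⊕ o1 ⊕ n ⊕ o1 ⊕ k ⊕ o1) ⊕ (y' ⊕ y'))) by ring.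
    apply le_add. }
  rewrite <- H in H1. apply (lt_irrefl (p ⊕ p)). eapply lt_le_trans; eauto.
Qed.

Lemma pair_inj x y x' y' p : ispair x y p -> ispair x' y' p -> x = x' /\ y = y'.
Proof.
  intros H H'.
  assert (Hn : x ⊕ y = x' ⊕ y').
  { destruct (trich (x ⊕ y) (x' ⊕ y')) as [h|[h|h]]; auto; exfalso.
    apply (pair_inj_aux _ _ _ _ _ H H' h). apply (pair_inj_aux _ _ _ _ _ H' H h). }
  unfold Defs.ispair in *. rewrite H in H'. rewrite Hn in H'.
  rewrite !(add_comm ((x' ⊕ y') ⊗ _)) in H'.
  apply add_cancel_r in H'. apply double_inj in H'. subst. split; auto.
  apply add_cancel_r in Hn. auto.
Qed.


Lemma LNP (F : formula) (HF : is_Delta0 F) (tl : nat -> Num M) (b : Num M) :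
  (exists y, y ≺ b /\ sat M (scons y tl) E F) ->
  exists y, sat M (scons y tl) E F /\ forall y', y' ≺ y -> ~ sat M (scons y' tl) E F.
Proof.
  intros [y0 [Hy0 Fy0]].
  assert (HP : forall n, (forall y, y ≺ n -> ~ sat M (scons y tl) E F) \/
     exists y, y ≺ n /\ sat M (scons y tl) E F /\ forall y', y' ≺ y -> ~ sat M (scons y' tl) E F).
  { ind0 (fOr (fBAllN (tvar 1) (fNot (fren (placeL [0] 3) F)))
              (fBExN (tvar 1) (fAnd (fren (placeL [0] 3) F) (fBAllN (tvar 0) (fNot (fren (placeL [0] 4) F)))))) tl.
    - left. intros y H. elim (A7 _ H).
    - intros n [H|H].
      + destruct (classic (sat M (scons n tl) E F)) as [Fn|Fn].
        * right. exists n. split. apply lt_succ. split; auto.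
        * left. intros y Hy. apply A8 in Hy. destruct Hy as [Hy|Hy]; [auto|subst; auto].
      + right. destruct H as [y [Hy R]]. exists y. split; auto. apply A8; auto. }
  destruct (HP b) as [H|[y [_ H]]]. elim (H y0 Hy0 Fy0). exists y; auto.
Qed.






Variable θ : formula.
Hypothesis Hθ : is_Delta0 θ.
Variable e : nat -> Num M.








Definition ThT x y z (tl : nat -> Num M) := sat M (scons z (scons y (scons x tl))) E θ.

Definition GrF : formula :=
  fAnd (fLt (tvar 0) (tplus (tvar 1) tone))
   (fAnd (fBAllN (tvar 0) (fBExN (tvar 2) (fNot (fren (placeL [0;1;4] 5) θ))))
         (fOr (fEq (tvar 0) (tvar 1)) (fBAllN (tvar 1) (fren (placeL [0;1;3] 4) θ)))).
Arguments GrF : simpl never.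

Definition GrT x s v tl := v ≺ s ⊕ o1 /\ (forall y, y ≺ v -> exists z, z ≺ s /\ ~ ThT x y z tl)
   /\ (v = s \/ forall z, z ≺ s -> ThT x v z tl).

Lemma GrF_spec v s x tl : sat M (scons v (scons s (scons x tl))) E GrF <-> GrT x s v tl.
Proof. unfold GrF. simpl. setoid_rewrite sat_place. simpl. reflexivity. Qed.

Lemma GrF_D0 : is_Delta0 GrF.
Proof. unfold GrF. repeat (first [apply D0_ren | constructor | assumption]). Qed.

Definition IncF : formula :=
  fBExN (tplus (tvar 0) tone)
   (fBExN (tplus (tplus (tvar 1) tone) tone)
     (fBExN (tplus (tplus (tvar 2) tone) tone)
        (fAnd (fEq (tvar 0) (tplus (tvar 3) tone))
         (fAnd (fren (placeL [2;3;4] 5) GrF)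
          (fAnd (fren (placeL [1;0;4] 5) GrF) (fLt (tvar 2) (tvar 1))))))).
Arguments IncF : simpl never.

Definition IncT x s tl := exists v, v ≺ s ⊕ o1 /\ exists v', v' ≺ s ⊕ o1 ⊕ o1 /\
  exists s', s' ≺ s ⊕ o1 ⊕ o1 /\ s' = s ⊕ o1 /\ GrT x s v tl /\ GrT x s' v' tl /\ v ≺ v'.

Lemma IncF_spec s x tl : sat M (scons s (scons x tl)) E IncF <-> IncT x s tl.
Proof. unfold IncF. cbn -[GrF]. setoid_rewrite sat_place. cbn -[GrF]. setoid_rewrite GrF_spec. reflexivity. Qed.


Lemma IncF_D0 : is_Delta0 IncF.
Proof. unfold IncF. repeat (first [apply D0_ren | apply GrF_D0 | constructor | assumption]). Qed.

Definition ColF : formula :=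
  fAnd (fLt (tvar 0) (tplus (tplus (tvar 3) tone) tone))
   (fAnd (fBAllN (tvar 0) (fBAllN (tvar 3) (fImp (fNot (fLt (tvar 0) (tvar 3))) (fNot (fren (placeL [0;1] 6) IncF)))))
         (fOr (fEq (tvar 0) (tplus (tvar 3) tone)) (fBExN (tvar 2) (fAnd (fNot (fLt (tvar 0) (tvar 2))) (fren (placeL [0;1] 5) IncF))))).

Definition ColT c i j a tl := c ≺ a ⊕ o1 ⊕ o1 /\
  (forall x, x ≺ c -> forall s, s ≺ j -> ~ s ≺ i -> ~ IncT x s tl) /\
  (c = a ⊕ o1 \/ exists s, s ≺ j /\ ~ s ≺ i /\ IncT c s tl).

Lemma ColF_spec c i j a tl : sat M (scons c (scons i (scons j (scons a tl)))) E ColF <-> ColT c i j a tl.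
Proof. unfold ColF. cbn -[IncF]. setoid_rewrite sat_place. cbn -[IncF]. setoid_rewrite IncF_spec. reflexivity. Qed.

Lemma ColF_D0 : is_Delta0 ColF.
Proof. unfold ColF. repeat (first [apply D0_ren | apply IncF_D0 | constructor | assumption]). Qed.

Definition ispF (x y p : term) : formula :=
  fEq (tplus p p) (tplus (ttimes (tplus x y) (tplus (tplus x y) tone)) (tplus y y)).

Definition CsetF : formula :=
  fBAllN (tplus (tvar 1) tone) (fBAllN (tplus (tvar 0) tone) (fBAllN (tplus (tvar 1) tone)
    (fBAllN (tplus (tvar 4) tone)
      (fImp (ispF (tvar 2) (tvar 1) (tvar 3)) (fImp (ispF (tvar 3) (tvar 0) (tvar 5))
        (fImp (fLt (tvar 2) (tvar 1)) (fren (placeL [0;2;1;6] 7) ColF))))))).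

Definition Cmem q a := forall p, p ≺ q ⊕ o1 -> forall i, i ≺ p ⊕ o1 -> forall j, j ≺ p ⊕ o1 ->
  forall c, c ≺ q ⊕ o1 -> ispair i j p -> ispair p c q -> i ≺ j -> ColT c i j a e.

Lemma CsetF_spec w q a : sat M (scons w (scons q (scons a e))) E CsetF <-> Cmem q a.
Proof. unfold CsetF. cbn -[ColF]. setoid_rewrite sat_place. cbn -[ColF]. setoid_rewrite ColF_spec. reflexivity. Qed.

Lemma CsetF_D0 : is_Delta0 CsetF.
Proof. unfold CsetF. repeat (first [apply D0_ren | apply ColF_D0 | constructor | assumption]). Qed.

Definition OpF : formula :=
  fBAllN (tplus (tvar 1) tone) (fBAllN (tplus (tvar 0) tone) (fBAllN (tplus (tvar 1) tone)
    (fBAllN (tplus (tvar 4) tone)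
      (fImp (ispF (tvar 2) (tvar 1) (tvar 3)) (fImp (ispF (tvar 3) (tvar 0) (tvar 5))
        (fAnd (fLt (tvar 0) (tplus (tvar 2) tone)) (fAnd (fLt (tvar 0) (tplus (tvar 1) tone))
          (fOr (fEq (tvar 0) (tvar 2)) (fEq (tvar 0) (tvar 1)))))))))).

Definition isMin u v r := r ≺ u ⊕ o1 /\ r ≺ v ⊕ o1 /\ (r = u \/ r = v).

Definition Opmem q := forall p, p ≺ q ⊕ o1 -> forall u, u ≺ p ⊕ o1 -> forall v, v ≺ p ⊕ o1 ->
  forall r, r ≺ q ⊕ o1 -> ispair u v p -> ispair p r q -> isMin u v r.

Lemma OpF_spec w q a : sat M (scons w (scons q (scons a e))) E OpF <-> Opmem q.
Proof. unfold OpF. cbn. reflexivity. Qed.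

Lemma OpF_D0 : is_Delta0 OpF.
Proof. unfold OpF. repeat constructor. Qed.

Definition UF : formula := fLt (tvar 1) (tplus (tplus (tvar 2) tone) tone).


Definition Th x y z := ThT x y z e.
Definition Gr x s v := GrT x s v e.
Definition Inc x s := IncT x s e.
Definition Col c i j a := ColT c i j a e.

Ltac d0' := repeat (first [apply D0_ren | apply GrF_D0 | apply IncF_D0 | apply ColF_D0 | constructor | assumption]).

Definition QF : formula := fBAllN (tvar 1) (fren (placeL [0;1;3] 4) θ).
Lemma QF_spec y s x : sat M (scons y (scons s (scons x e))) E QF <-> forall z, z ≺ s -> Th x y z.
Proof. unfold QF. cbn. setoid_rewrite sat_place. cbn. reflexivity. Qed.

Lemma lt_lt_succ m n : m ≺ n -> m ≺ n ⊕ o1.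
Proof. intros H. apply A8; auto. Qed.

Lemma Gr_exists x s : exists v, Gr x s v.
Proof.
  destruct (classic (exists y, y ≺ s /\ sat M (scons y (scons s (scons x e))) E QF)) as [Hex|Hno].
  - destruct (LNP QF ltac:(unfold QF; d0') _ s Hex) as [v [Hv Hmin]].
    destruct Hex as [y0 [Hy0 Q0]].
    assert (Hvs : v ≺ s).
    { destruct (trich y0 v) as [h|[h|h]].
      - elim (Hmin _ h Q0).
      - subst; auto.
      - eapply lt_trans; eauto. }
    exists v. split; [apply lt_lt_succ; auto|split].
    + intros y Hy. specialize (Hmin y Hy). rewrite QF_spec in Hmin.
      apply not_all_ex_not in Hmin. destruct Hmin as [z Hz]. exists z. tauto.
    + right. apply QF_spec. auto.
  - exists s. split; [apply lt_succ|split].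
    + intros y Hy. assert (Hq : ~ (forall z, z ≺ s -> Th x y z)).
      { intros Hq. apply Hno. exists y. split; auto. apply QF_spec; auto. }
      apply not_all_ex_not in Hq. destruct Hq as [z Hz]. exists z. tauto.
    + left; auto.
Qed.

Lemma Gr_nlt x s v v' : Gr x s v -> Gr x s v' -> ~ v ≺ v'.
Proof.
  intros [H1 [H2 H3]] [H1' [H2' H3']] Hlt.
  destruct (H2' v Hlt) as [z [Hz Hn]].
  destruct H3 as [H3|H3].
  - subst. apply lt_succ_iff in H1'. apply (le_not_lt _ _ H1' Hlt).
  - apply Hn. apply H3; auto.
Qed.

Lemma Gr_unique x s v v' : Gr x s v -> Gr x s v' -> v = v'.
Proof.
  intros H H'. destruct (trich v v') as [h|[h|h]]; auto; exfalso.
  apply (Gr_nlt _ _ _ _ H H' h). apply (Gr_nlt _ _ _ _ H' H h).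
Qed.

Lemma Gr_mono1 x s v v' : Gr x s v -> Gr x (s ⊕ o1) v' -> le v v'.
Proof.
  intros [H1 [H2 H3]] [H1' [H2' H3']]. apply not_lt_le. intros Hlt.
  destruct (H2 v' Hlt) as [z [Hz Hn]].
  apply lt_succ_iff in H1.
  destruct H3' as [H3'|H3'].
  - subst. apply (le_not_lt _ _ H1). eapply lt_trans; [apply lt_succ| exact Hlt].
  - apply Hn. apply H3'. apply lt_lt_succ; auto.
Qed.

Lemma Gr_bound x s v y0 : Gr x s v -> (forall z, Th x y0 z) -> le v y0.
Proof.
  intros [H1 [H2 H3]] Hy. apply not_lt_le. intros Hlt.
  destruct (H2 y0 Hlt) as [z [_ Hz]]. apply Hz, Hy.
Qed.

Lemma Gr_lt x s v : Gr x s v -> v ≺ s ⊕ o1.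
Proof. intros [H _]; auto. Qed.

Definition PP x := forall y, exists z, ~ Th x y z.

Definition CollF : formula := fBAllN (tvar 1) (fBExN (tvar 1) (fNot (fren (placeL [0;1;4] 5) θ))).

Lemma collection x : PP x -> forall v, exists b, forall y, y ≺ v -> exists z, z ≺ b /\ ~ Th x y z.
Proof.
  intros HP. ind1 CollF (scons x e).
  - intros n. unfold CollF. cbn. setoid_rewrite sat_place. cbn. reflexivity.
  - exists z0. intros y H. elim (A7 _ H).
  - intros v [b Hb]. destruct (HP v) as [z Hz]. exists (b ⊕ z ⊕ o1).
    intros y Hy. apply A8 in Hy. destruct Hy as [Hy|Hy].
    + destruct (Hb y Hy) as [z' [Hz' Hn]]. exists z'. split; auto.
      eapply lt_le_trans. exact Hz'. rewrite add_assoc. apply le_add.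
    + subst. exists z. split; auto. apply lt_succ_iff. rewrite add_comm. apply le_add.
Qed.

Lemma g_unbounded x : PP x -> forall vv n, exists s, ~ s ≺ n /\ exists u, Gr x s u /\ vv ≺ u.
Proof.
  intros HP vv n. destruct (collection x HP (vv ⊕ o1)) as [b Hb].
  set (s := b ⊕ vv ⊕ n ⊕ o1).
  exists s. split.
  - apply le_not_lt. left. apply lt_succ_iff. unfold s.
    replace (b ⊕ vv ⊕ n) with (n ⊕ (b ⊕ vv)) by ring. apply le_add.
  - destruct (Gr_exists x s) as [u Hu]. exists u. split; auto.
    apply NNPP. intros Hn. apply not_lt_le in Hn.
    destruct (Hb u) as [z [Hz Hnz]]. apply lt_succ_iff; auto.
    destruct Hu as [_ [_ [H3|H3]]].
    + assert (Hl : le s vv) by (rewrite <- H3; auto).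
      apply (le_not_lt _ _ Hl). unfold s. apply lt_succ_iff.
      replace (b ⊕ vv ⊕ n) with (vv ⊕ (b ⊕ n)) by ring. apply le_add.
    + apply Hnz. apply H3. eapply lt_le_trans. exact Hz.
      unfold s. rewrite !add_assoc. apply le_add.
Qed.

Lemma Inc_intro x s v v' : Gr x s v -> Gr x (s ⊕ o1) v' -> v ≺ v' -> Inc x s.
Proof.
  intros H H' Hl. exists v. split; [apply (Gr_lt _ _ _ H)|]. exists v'. split; [apply (Gr_lt _ _ _ H')|].
  exists (s ⊕ o1). split; [apply lt_succ|]. split; auto.
Qed.

Lemma Inc_elim x s v v' : Inc x s -> Gr x s v -> Gr x (s ⊕ o1) v' -> v ≺ v'.
Proof.
  intros [w [_ [w' [_ [s' [_ [-> [H1 [H2 H3]]]]]]]]] H H'.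
  rewrite (Gr_unique _ _ _ _ H H1), (Gr_unique _ _ _ _ H' H2). auto.
Qed.

Definition FgtF : formula := fAnd (fNot (fLt (tvar 0) (tvar 1)))
  (fBExN (tplus (tvar 0) tone) (fAnd (fren (placeL [0;1;4] 5) GrF) (fLt (tvar 3) (tvar 0)))).

Lemma FgtF_spec s n vv x : sat M (scons s (scons n (scons vv (scons x e)))) E FgtF <->
  ~ s ≺ n /\ exists u, u ≺ s ⊕ o1 /\ Gr x s u /\ vv ≺ u.
Proof. unfold FgtF. cbn -[GrF]. setoid_rewrite sat_place. cbn -[GrF]. setoid_rewrite GrF_spec. reflexivity. Qed.

Lemma jump x n vv : Gr x n vv -> (exists s, ~ s ≺ n /\ exists u, Gr x s u /\ vv ≺ u) ->
  exists s, ~ s ≺ n /\ Inc x s.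
Proof.
  intros Hn [s0 [Hs0 [u0 [Hu0 Hv0]]]].
  destruct (LNP FgtF ltac:(unfold FgtF; d0') (scons n (scons vv (scons x e))) (s0 ⊕ o1)) as [s [Fs Hmin]].
  { exists s0. split. apply lt_succ. apply FgtF_spec. split; auto. exists u0. split; auto. apply (Gr_lt _ _ _ Hu0). }
  apply FgtF_spec in Fs. destruct Fs as [Hsn [u [_ [Hu Hvu]]]].
  assert (Hns : n ≺ s).
  { apply not_lt_le in Hsn. destruct Hsn as [h|h]; auto. subst.
    rewrite (Gr_unique _ _ _ _ Hn Hu) in Hvu. elim (lt_irrefl _ Hvu). }
  destruct (zero_or_succ s) as [->|[t ->]]. elim (A7 _ Hns).
  apply lt_succ_iff in Hns.
  exists t. split. apply le_not_lt; auto.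
  destruct (Gr_exists x t) as [ut Hut].
  apply (Inc_intro _ _ ut u); auto.
  assert (Hnf := Hmin t (lt_succ t)). rewrite FgtF_spec in Hnf.
  assert (~ vv ≺ ut).
  { intros h. apply Hnf. split. apply le_not_lt; auto. exists ut. split; auto. apply (Gr_lt _ _ _ Hut). }
  apply not_lt_le in H. eapply le_lt_trans; eauto.
Qed.

Lemma PP_inc x : PP x -> forall n, exists s, ~ s ≺ n /\ Inc x s.
Proof.
  intros HP n. destruct (Gr_exists x n) as [vv Hvv]. apply (jump x n vv Hvv).
  apply g_unbounded; auto.
Qed.

Definition FltF : formula := fAnd (fNot (fLt (tvar 0) (tvar 1)))
  (fBExN (tplus (tvar 0) tone) (fAnd (fren (placeL [0;1;4] 5) GrF) (fLt (tvar 0) (tvar 3)))).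

Lemma FltF_spec s n vv x : sat M (scons s (scons n (scons vv (scons x e)))) E FltF <->
  ~ s ≺ n /\ exists u, u ≺ s ⊕ o1 /\ Gr x s u /\ u ≺ vv.
Proof. unfold FltF. cbn -[GrF]. setoid_rewrite sat_place. cbn -[GrF]. setoid_rewrite GrF_spec. reflexivity. Qed.

Lemma Gr_mono x s s' v v' : Gr x s v -> Gr x s' v' -> le s s' -> le v v'.
Proof.
  intros Hv Hv' Hss. apply not_lt_le. intros Hlt.
  destruct (LNP FltF ltac:(unfold FltF; d0') (scons s (scons v (scons x e))) (s' ⊕ o1)) as [t [Ft Hmin]].
  { exists s'. split. apply lt_succ. apply FltF_spec. split. apply le_not_lt; auto.
    exists v'. split; auto. apply (Gr_lt _ _ _ Hv'). }
  apply FltF_spec in Ft. destruct Ft as [Hts [u [_ [Hu Huv]]]].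
  assert (Hst : s ≺ t).
  { apply not_lt_le in Hts. destruct Hts as [h|h]; auto. subst.
    rewrite (Gr_unique _ _ _ _ Hv Hu) in Huv. elim (lt_irrefl _ Huv). }
  destruct (zero_or_succ t) as [->|[t' ->]]. elim (A7 _ Hst).
  apply lt_succ_iff in Hst.
  destruct (Gr_exists x t') as [ut Hut].
  assert (Hnf := Hmin t' (lt_succ t')). rewrite FltF_spec in Hnf.
  assert (~ ut ≺ v).
  { intros h. apply Hnf. split. apply le_not_lt; auto. exists ut. split; auto. apply (Gr_lt _ _ _ Hut). }
  apply not_lt_le in H. assert (Hm := Gr_mono1 _ _ _ _ Hut Hu).
  apply (le_not_lt _ _ (le_trans _ _ _ H Hm) Huv).
Qed.

Definition KF : formula := fBExN (tplus (tvar 0) tone) (fAnd (fren (placeL [0;1;3] 4) GrF) (fNot (fLt (tvar 0) (tvar 2)))).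

Lemma inc_PP x : (forall n, exists s, ~ s ≺ n /\ Inc x s) -> PP x.
Proof.
  intros Hinf y0. apply NNPP. intros Hn.
  assert (Hy0 : forall z, Th x y0 z).
  { intros z. apply NNPP. intros h. apply Hn. exists z; auto. }
  assert (HK : forall k, exists s u, u ≺ s ⊕ o1 /\ Gr x s u /\ ~ u ≺ k).
  { ind1 KF (scons x e).
    - intros k. unfold KF. cbn -[GrF]. setoid_rewrite sat_place. cbn -[GrF]. setoid_rewrite GrF_spec. reflexivity.
    - destruct (Gr_exists x z0) as [u Hu]. exists z0, u. split. apply (Gr_lt _ _ _ Hu). split; auto. apply A7.
    - intros k [s [u [_ [Hu Hku]]]].
      destruct (Hinf s) as [s' [Hs' Hinc]].
      destruct (Gr_exists x s') as [w Hw]. destruct (Gr_exists x (s' ⊕ o1)) as [w' Hw'].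
      assert (Hww := Inc_elim _ _ _ _ Hinc Hw Hw').
      assert (Huw := Gr_mono _ _ _ _ _ Hu Hw (not_lt_le _ _ Hs')).
      exists (s' ⊕ o1), w'. split. apply (Gr_lt _ _ _ Hw'). split; auto.
      apply le_not_lt. apply lt_le_succ. eapply le_lt_trans. apply not_lt_le; exact Hku.
      eapply le_lt_trans; eauto. }
  destruct (HK (y0 ⊕ o1)) as [s [u [_ [Hu Hnu]]]].
  apply Hnu. apply lt_succ_iff. apply (Gr_bound _ _ _ _ Hu Hy0).
Qed.

Definition ExF : formula := fBExN (tvar 2) (fAnd (fNot (fLt (tvar 0) (tvar 2))) (fren (placeL [0;1] 4) IncF)).

Lemma ExF_spec x i j : sat M (scons x (scons i (scons j e))) E ExF <->
  exists s, s ≺ j /\ ~ s ≺ i /\ Inc x s.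
Proof. unfold ExF. cbn -[IncF]. setoid_rewrite sat_place. cbn -[IncF]. setoid_rewrite IncF_spec. reflexivity. Qed.

Lemma Col_exists i j a : exists c, Col c i j a.
Proof.
  destruct (classic (exists x, x ≺ a ⊕ o1 /\ sat M (scons x (scons i (scons j e))) E ExF)) as [Hex|Hno].
  - destruct (LNP ExF ltac:(unfold ExF; d0') _ _ Hex) as [c [Hc Hmin]].
    destruct Hex as [x0 [Hx0 F0]].
    assert (Hca : c ≺ a ⊕ o1).
    { destruct (trich x0 c) as [h|[h|h]].
      - elim (Hmin _ h F0).
      - subst; auto.
      - eapply lt_trans; eauto. }
    exists c. split; [apply lt_lt_succ; auto|split].
    + intros x Hx s Hs Hsi Hinc. apply (Hmin x Hx). apply ExF_spec. exists s; auto.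
    + right. apply ExF_spec; auto.
  - exists (a ⊕ o1). split; [apply lt_succ|split].
    + intros x Hx s Hs Hsi Hinc. apply Hno. exists x. split; auto. apply ExF_spec. exists s; auto.
    + left; auto.
Qed.

Lemma Col_nlt c c' i j a : Col c i j a -> Col c' i j a -> ~ c ≺ c'.
Proof.
  intros [H1 [H2 H3]] [H1' [H2' H3']] Hlt.
  destruct H3 as [H3|[s [Hs [Hsi Hinc]]]].
  - subst. apply lt_succ_iff in H1'. apply (le_not_lt _ _ H1' Hlt).
  - apply (H2' c Hlt s Hs Hsi Hinc).
Qed.

Lemma Col_unique c c' i j a : Col c i j a -> Col c' i j a -> c = c'.
Proof.
  intros H H'. destruct (trich c c') as [h|[h|h]]; auto; exfalso.
  apply (Col_nlt _ _ _ _ _ H H' h). apply (Col_nlt _ _ _ _ _ H' H h).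
Qed.

Lemma isMin_exists u v : exists r, isMin u v r.
Proof.
  destruct (trich u v) as [h|[h|h]].
  - exists u. split. apply lt_succ. split. apply lt_lt_succ; auto. left; auto.
  - subst. exists v. split. apply lt_succ. split. apply lt_succ. left; auto.
  - exists v. split. apply lt_lt_succ; auto. split. apply lt_succ. right; auto.
Qed.

Lemma isMin_le u v r : isMin u v r -> forall t, le t r <-> le t u /\ le t v.
Proof.
  intros [H1 [H2 H3]] t. apply lt_succ_iff in H1. apply lt_succ_iff in H2. split.
  - intros H. split; eapply le_trans; eauto.
  - intros [Hu Hv]. destruct H3; subst; auto.
Qed.

Lemma isMin_unique u v r r' : isMin u v r -> isMin u v r' -> r = r'.
Proof.
  intros H H'. apply le_antisym.
  - apply (isMin_le _ _ _ H'). apply (isMin_le _ _ _ H). apply le_refl.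
  - apply (isMin_le _ _ _ H). apply (isMin_le _ _ _ H'). apply le_refl.
Qed.

Lemma Col_add i j k a c1 c2 d : i ≺ j -> j ≺ k -> Col c1 i j a -> Col c2 j k a -> isMin c1 c2 d ->
  Col d i k a.
Proof.
  intros Hij Hjk [C1 [C2 C3]] [D1 [D2 D3]] Hm.
  assert (Hd1 := proj1 (isMin_le _ _ _ Hm d) (le_refl d)). destruct Hd1 as [Hd1 Hd2].
  split; [|split].
  - destruct Hm as [_ [_ [->| ->]]]; auto.
  - intros x Hx s Hs Hsi. destruct (classic (s ≺ j)) as [h|h].
    + apply C2; auto. eapply lt_le_trans; eauto.
    + apply D2; auto. eapply lt_le_trans; eauto.
  - destruct Hm as [_ [_ [->| ->]]].
    + destruct C3 as [C3|[s [Hs [Hsi Hinc]]]]; auto. right. exists s. split; auto. eapply lt_trans; eauto.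
    + destruct D3 as [D3|[s [Hs [Hsi Hinc]]]]; auto. right. exists s. split; auto. split; auto.
      intros h. apply Hsi. eapply lt_trans; eauto.
Qed.

Lemma make_set (F : formula) (HF : is_Delta0 F) (a : Num M) (P : Num M -> Prop) :
  (forall w q, sat M (scons w (scons q (scons a e))) E F <-> P q) ->
  Delta01CA M -> exists X, forall q, mem M q X <-> P q.
Proof.
  intros HP HD. destruct (HD (fExN F) (fAllN F) HF HF (scons a e) E) as [X HX].
  - intros m; simpl. split.
    + intros [w Hw] w'. apply HP. apply HP in Hw. exact Hw.
    + intros H. exists z0. apply H.
  - exists X. intros q. rewrite HX. simpl. split.
    + intros [w Hw]. apply HP in Hw; auto.
    + intros H. exists z0. apply HP; auto.
Qed.

Lemma graph_dec X (P : Num M -> Num M -> Num M -> Prop) x y z :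
  (forall q, mem M q X <-> forall p, p ≺ q ⊕ o1 -> forall i, i ≺ p ⊕ o1 -> forall j, j ≺ p ⊕ o1 ->
     forall c, c ≺ q ⊕ o1 -> ispair i j p -> ispair p c q -> P i j c) ->
  graph3 M X x y z -> P x y z.
Proof.
  intros HX [p [q [H1 [H2 H3]]]]. pose proof (proj1 (HX q) H3) as H4.
  destruct (pair_bound _ _ _ H1) as [Hx Hy]. destruct (pair_bound _ _ _ H2) as [Hp Hz].
  apply (H4 p (proj2 (lt_succ_iff _ _) Hp) x (proj2 (lt_succ_iff _ _) Hx) y (proj2 (lt_succ_iff _ _) Hy) z (proj2 (lt_succ_iff _ _) Hz)); auto.
Qed.

Lemma graph_make X (P : Num M -> Num M -> Num M -> Prop) x y z :
  (forall q, mem M q X <-> forall p, p ≺ q ⊕ o1 -> forall i, i ≺ p ⊕ o1 -> forall j, j ≺ p ⊕ o1 ->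
     forall c, c ≺ q ⊕ o1 -> ispair i j p -> ispair p c q -> P i j c) ->
  P x y z -> graph3 M X x y z.
Proof.
  intros HX HP. destruct (pair_exists x y) as [p Hp]. destruct (pair_exists p z) as [q Hq].
  exists p, q. split; auto. split; auto. apply (proj2 (HX q)).
  intros p' _ i _ j _ c _ H1 H2.
  destruct (pair_inj _ _ _ _ _ Hq H2) as [<- <-].
  destruct (pair_inj _ _ _ _ _ Hp H1) as [<- <-]. auto.
Qed.

Lemma key (HD : Delta01CA M) (HART : ART M) (a : Num M)
  (H0 : exists y, forall z, Th z0 y z)
  (HS : forall x, (exists y, forall z, Th x y z) -> exists y, forall z, Th (x ⊕ o1) y z) :
  exists y, forall z, Th a y z.
Proof.
  apply NNPP. intros Hna.
  destruct (make_set UF ltac:(repeat constructor) a (fun q => q ≺ a ⊕ o1 ⊕ o1)) as [UX HU].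
  { intros w q; cbn; reflexivity. }
  auto.
  destruct (make_set OpF OpF_D0 a Opmem) as [OX HO]. { intros w q; apply OpF_spec. } auto.
  destruct (make_set CsetF CsetF_D0 a (fun q => Cmem q a)) as [CX HC]. { intros w q; apply CsetF_spec. } auto.
  assert (HOg : forall u v r, graph3 M OX u v r -> isMin u v r).
  { intros u v r. apply (graph_dec OX isMin). exact HO. }
  assert (HOm : forall u v r, isMin u v r -> graph3 M OX u v r).
  { intros u v r. apply (graph_make OX isMin). exact HO. }
  assert (HCg : forall i j c, i ≺ j -> graph3 M CX i j c -> Col c i j a).
  { intros i j c Hij Hg. revert Hij. revert Hg. apply (graph_dec CX (fun i j c => i ≺ j -> Col c i j a)).
    intros q. rewrite HC. unfold Cmem. reflexivity. }
  assert (HCm : forall i j c, i ≺ j -> Col c i j a -> graph3 M CX i j c).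
  { intros i j c Hij Hc. apply (graph_make CX (fun i j c => i ≺ j -> Col c i j a));
    [intros q; rewrite HC; unfold Cmem; reflexivity | auto]. }
  destruct (HART UX OX CX) as [I [c [HcU [HInf Hhom]]]].
  - split; [|split; [|split]].
    + exists (a ⊕ o1 ⊕ o1). intros x; apply HU.
    + intros u v Hu Hv. destruct (isMin_exists u v) as [r Hr]. exists r. split; auto.
      apply HU. destruct Hr as [_ [_ [->| ->]]]; apply HU; auto.
    + intros u v r r' _ _ H1 H2. apply (isMin_unique u v); auto.
    + intros u v w uv vw uvw uvw' _ _ _ H1 H2 H3 H4.
      apply HOg in H1. apply HOg in H2. apply HOg in H3. apply HOg in H4.
      assert (Ht : forall t, le t uvw <-> le t uvw').
      { intros t. rewrite (isMin_le _ _ _ H2), (isMin_le _ _ _ H1), (isMin_le _ _ _ H4), (isMin_le _ _ _ H3). tauto. }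
      apply le_antisym; [apply Ht|apply Ht]; apply le_refl.
  - split.
    + intros i j Hij. destruct (Col_exists i j a) as [c Hc]. exists c. split.
      apply HU. apply Hc. apply HCm; auto.
    + intros i j c c' Hij H1 H2. apply (Col_unique c c' i j a); apply HCg with (i := i) (j := j); auto.
  - intros i j k u v d Hij Hjk H1 H2 H3.
    apply HCg in H1; auto. apply HCg in H2; auto. apply HCg in H3; [|eapply lt_trans; eauto].
    destruct (isMin_exists u v) as [r Hr].
    assert (Hcr := Col_add _ _ _ _ _ _ _ Hij Hjk H1 H2 Hr).
    rewrite (Col_unique _ _ _ _ _ H3 Hcr). apply HOm; auto.
  - destruct (HInf z0) as [i0 [_ Hi0]].
    assert (F1 : forall x, x ≺ c -> forall s, ~ s ≺ i0 -> ~ Inc x s).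
    { intros x Hx s Hs. destruct (HInf (s ⊕ o1)) as [j [Hj HjI]].
      assert (Hs' : s ≺ j) by (eapply lt_le_trans; [apply lt_succ|exact Hj]).
      assert (Hij : i0 ≺ j) by (eapply le_lt_trans; [apply not_lt_le; exact Hs|exact Hs']).
      assert (Hc := HCg _ _ _ Hij (Hhom _ _ Hi0 HjI Hij)).
      destruct Hc as [_ [Hc _]]. apply Hc; auto. }
    assert (Hphi : forall x, x ≺ c -> exists y, forall z, Th x y z).
    { intros x Hx. apply NNPP. intros Hn. destruct (PP_inc x) with (n := i0) as [s [Hs Hinc]].
      - intros y. apply NNPP. intros h. apply Hn. exists y. intros z. apply NNPP. intros h'. apply h. exists z; auto.
      - apply (F1 x Hx s Hs Hinc). }
    destruct (classic (c = a ⊕ o1)) as [Hca|Hca].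
    + apply Hna. apply Hphi. rewrite Hca. apply lt_succ.
    + assert (Hinf : forall n, exists s, ~ s ≺ n /\ Inc c s).
      { intros n. destruct (HInf n) as [i [Hni HiI]]. destruct (HInf (i ⊕ o1)) as [j [Hj HjI]].
        assert (Hij : i ≺ j) by (eapply lt_le_trans; [apply lt_succ|exact Hj]).
        assert (Hc := HCg _ _ _ Hij (Hhom _ _ HiI HjI Hij)).
        destruct Hc as [_ [_ [Hc|[s [Hs [Hsi Hinc]]]]]]. elim (Hca Hc).
        exists s. split; auto. intros h. apply Hsi. eapply lt_le_trans; eauto. }
      assert (HPc := inc_PP c Hinf).
      assert (Hnc : ~ exists y, forall z, Th c y z).
      { intros [y Hy]. destruct (HPc y) as [z Hz]. apply Hz, Hy. }
      destruct (zero_or_succ c) as [->|[c' ->]].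
      * apply Hnc, H0.
      * apply Hnc, HS, Hphi, lt_succ.
Qed.

End Main.

Theorem mainTheorem5 (M : L2structure) :
  RCA0 M -> ART M -> SigmaIND 2 M.
Proof.
  intros [HB [HI HD]] HART phi Hphi e E H0 HS m.
  destruct phi; simpl in Hphi; try contradiction.
  destruct phi; simpl in Hphi; try contradiction.
  exact (key M HB HI E phi Hphi e HD HART m H0 HS).
Qed.
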